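(* Let $P=\bigcup_{i=1}^n I_i$, $I_i=[p_{i-1},p_i]$, be a simple closed $n$-gon in $\mathbb{R}^2$ ($n\ge3$, indices modulo $n$). For $1\le i\le n$ let $u_i$ be the unit normal to $\mathrm{aff}\,I_i$ oriented so that for every $b\in\mathrm{relint}\,I_i$ and all sufficiently small $\varepsilon>0$, $b+\varepsilon u_i\in\mathrm{ext}P$ and $b-\varepsilon u_i\in\mathrm{int}P$; put $u_{i,i+1}=u_i+u_{i+1}$. (a) Fix $i$, $1\le i\le n$, let $b\in\mathrm{relint}\,I_i$ and let $u$ be a vector with $\langle u,u_i\rangle>0$. For real $\varepsilon$ put $I^\varepsilon=[b+\varepsilon u,\ p_i+\varepsilon u_{i,i+1}]$. Then for every sufficiently small $\varepsilon>0$ (how small may depend on $b$ and $u$), $I^\varepsilon\subset\mathrm{ext}P$ and $I^{-\varepsilon}\subset\mathrm{int}P$. (b) Fix $i$, $1\le i\le n$, and for real $\varepsilon$ put $J^\varepsilon=[p_i+\varepsilon u_{i,i+1},\ p_{i+1}+\varepsilon u_{i+1,i+2}]$. Then for every sufficiently small $\varepsilon>0$, $J^\varepsilon\subset\mathrm{ext}P$ and $J^{-\varepsilon}\subset\mathrm{int}P$.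
   Context: A simple closed $n$-gon is a polygon $P=\bigcup_{i=1}^n[p_{i-1},p_i]$ with $n$ distinct vertices, $p_n=p_0$, whose edges intersect only in the common endpoints of consecutive edges. $\mathbb{R}^2\setminus P$ has exactly two components: the bounded one $\mathrm{int}P$ and the unbounded one $\mathrm{ext}P$. $[x,y]$ denotes the closed segment, $\mathrm{relint}$ relative interior, $\mathrm{aff}$ affine hull. *)

(* Defs.v *)
From HB Require Import structures.
From mathcomp Require Import all_boot all_order all_algebra.
From mathcomp Require Import all_classical all_reals all_analysis.
Set Implicit Arguments. Unset Strict Implicit. Unset Printing Implicit Defensive.
Import Order.TTheory GRing.Theory Num.Theory.
Import numFieldNormedType.Exports.
Local Open Scope classical_set_scope.
Local Open Scope ring_scope.

Section Defs.
Variable R : realType.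
Notation V := 'rV[R]_2.

Definition dot (u v : V) : R := \sum_(k < 2) u ord0 k * v ord0 k.

Definition segment (x y : V) : set V :=
  [set z | exists t : R, 0 <= t <= 1 /\ z = (1 - t) *: x + t *: y].

Definition relint_segment (x y : V) : set V :=
  [set z | exists t : R, 0 < t < 1 /\ z = (1 - t) *: x + t *: y].

Definition polygon (n : nat) (p : nat -> V) : set V :=
  \bigcup_(i in [set i : nat | (1 <= i <= n)%N]) segment (p i.-1) (p i).

Definition simple_closed_polygon (n : nat) (p : nat -> V) : Prop :=
  [/\ (3 <= n)%N,
      (forall k, p (k + n)%N = p k),
      (forall i j, (i < n)%N -> (j < n)%N -> p i = p j -> i = j) &
      (forall i j, (1 <= i <= n)%N -> (1 <= j <= n)%N -> (i < j)%N ->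
         segment (p i.-1) (p i) `&` segment (p j.-1) (p j) =
           if j == i.+1 then [set p i]
           else if (i == 1%N) && (j == n) then [set p 0%N]
           else set0)].

Definition poly_int (P : set V) : set V :=
  [set x | ~ P x /\ bounded_set (connected_component (~` P) x)].
Definition poly_ext (P : set V) : set V :=
  [set x | ~ P x /\ ~ bounded_set (connected_component (~` P) x)].

End Defs.

(* Main.v *)
Require Import Defs.
From HB Require Import structures.
From mathcomp Require Import all_boot all_order all_algebra.
From mathcomp Require Import all_classical all_reals all_analysis.
From mathcomp Require Import ring lra zify.
Import Order.TTheory GRing.Theory Num.Theory.
Import numFieldNormedType.Exports.
Local Open Scope classical_set_scope.
Local Open Scope ring_scope.
Set Implicit Arguments. Unset Strict Implicit. Unset Printing Implicit Defensive.

Section Lin.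
Variable R : realType.
Notation V := 'rV[R]_2.
Definition c0 (x : V) := x ord0 ord0.
Definition c1 (x : V) := x ord0 (@Ordinal 2 1 isT).
Lemma dotE (x y : V) : dot x y = c0 x * c0 y + c1 x * c1 y.
Proof. rewrite /dot big_ord_recr big_ord1 /c0 /c1 /=. by congr (_ * _ + _ * _); congr (_ _ _); apply: val_inj. Qed.
Lemma c0D (x y : V) : c0 (x + y) = c0 x + c0 y. Proof. by rewrite /c0 mxE. Qed.
Lemma c1D (x y : V) : c1 (x + y) = c1 x + c1 y. Proof. by rewrite /c1 mxE. Qed.
Lemma c0Z a (x : V) : c0 (a *: x) = a * c0 x. Proof. by rewrite /c0 mxE. Qed.
Lemma c1Z a (x : V) : c1 (a *: x) = a * c1 x. Proof. by rewrite /c1 mxE. Qed.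
Lemma c0N (x : V) : c0 (- x) = - c0 x. Proof. by rewrite /c0 mxE. Qed.
Lemma c1N (x : V) : c1 (- x) = - c1 x. Proof. by rewrite /c1 mxE. Qed.
Lemma c0B (x y : V) : c0 (x - y) = c0 x - c0 y. Proof. by rewrite c0D c0N. Qed.
Lemma c1B (x y : V) : c1 (x - y) = c1 x - c1 y. Proof. by rewrite c1D c1N. Qed.
Lemma c00 : c0 (0 : V) = 0. Proof. by rewrite /c0 mxE. Qed.
Lemma c10 : c1 (0 : V) = 0. Proof. by rewrite /c1 mxE. Qed.
Lemma vecP (x y : V) : c0 x = c0 y -> c1 x = c1 y -> x = y.
Proof.
move=> h0 h1; apply/matrixP => i j; rewrite (ord1 i).
case: j => [[|[|k]] hk] //.
- by move: h0; rewrite /c0; have -> : Ordinal hk = ord0 by apply: val_inj.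
- by move: h1; rewrite /c1; have -> : Ordinal hk = (@Ordinal 2 1 isT) by apply: val_inj.
Qed.
Definition cE := (c0D, c1D, c0Z, c1Z, c0N, c1N, c00, c10).
Lemma dotC (x y : V) : dot x y = dot y x. Proof. rewrite !dotE; ring. Qed.
Lemma dotDl (x y z : V) : dot (x + y) z = dot x z + dot y z. Proof. rewrite !dotE !cE; ring. Qed.
Lemma dotDr (x y z : V) : dot z (x + y) = dot z x + dot z y. Proof. rewrite !dotE !cE; ring. Qed.
Lemma dotZl a (x z : V) : dot (a *: x) z = a * dot x z. Proof. rewrite !dotE !cE; ring. Qed.
Lemma dotZr a (x z : V) : dot z (a *: x) = a * dot z x. Proof. rewrite !dotE !cE; ring. Qed.
Lemma dotNl (x z : V) : dot (- x) z = - dot x z. Proof. rewrite !dotE !cE; ring. Qed.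
Lemma dotNr (x z : V) : dot z (- x) = - dot z x. Proof. rewrite !dotE !cE; ring. Qed.
Lemma dotBl (x y z : V) : dot (x - y) z = dot x z - dot y z. Proof. by rewrite dotDl dotNl. Qed.
Lemma dotBr (x y z : V) : dot z (x - y) = dot z x - dot z y. Proof. by rewrite dotDr dotNr. Qed.
Lemma dot0l (z : V) : dot 0 z = 0. Proof. rewrite !dotE !cE; ring. Qed.
Definition dotL := (dotDl, dotDr, dotZl, dotZr, dotNl, dotNr, dot0l).
End Lin.
Ltac vecring := apply: vecP; rewrite !cE; ring.

Section Seg.
Variable R : realType.
Notation V := 'rV[R]_2.
Definition segf (x y : V) (t : R) : V := (1 - t) *: x + t *: y.
Lemma segE (x y : V) : segment x y = segf x y @` `[0, 1]%classic.
Proof.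
apply/seteqP; split=> z.
- by case=> t [ht ->]; exists t => //; rewrite /= in_itv /=.
- by case=> t /= ht <-; exists t; split => //; move: ht; rewrite in_itv.
Qed.
Lemma segf_cont (x y : V) : continuous (segf x y).
Proof.
have -> : segf x y = (fun t => (1-t)*:x) + (fun t => t*:y) by apply: funext.
move=> t; apply: continuousD.
  apply: (@continuousZr_tmp _ _ _ (fun t : R => 1 - t)).
  have -> : (fun t : R => 1 - t) = (fun=> 1) - id by apply: funext.
  by apply: continuousB; [exact: cst_continuous|exact: cvg_id].
by apply: (@continuousZr_tmp _ _ _ id); exact: cvg_id.
Qed.
Lemma seg_connected (x y : V) : connected (segment x y).
Proof.
rewrite segE; apply: connected_continuous_connected; first exact: segment_connected.
by apply: continuous_subspaceT => t; apply: segf_cont.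
Qed.
Lemma seg_compact (x y : V) : compact (segment x y).
Proof.
rewrite segE; apply: continuous_compact; last exact: segment_compact.
by apply: continuous_subspaceT => t; apply: segf_cont.
Qed.
Lemma seg_closed (x y : V) : closed (segment x y).
Proof. apply: compact_closed; [exact: norm_hausdorff|exact: seg_compact]. Qed.
End Seg.

Section Far.
Variable R : realType.
Notation V := 'rV[R]_2.
Lemma near_right_ex (Q : R -> Prop) : (\forall e \near 0^'+, Q e) ->
  exists d : R, 0 < d /\ forall e, 0 < e < d -> Q e.
Proof.
move=> /nbhs_ballP [d /= d0 H]; exists d; split => // e /andP [e0 ed].
apply: H => //; rewrite /ball /= sub0r normrN gtr0_norm //.
Qed.

Lemma segf_off (x y a c : V) e t :
  segf (x + e *: a) (y + e *: c) t = segf x y t + e *: segf a c t.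
Proof. rewrite /segf !scalerDr !scalerA (mulrC e) (mulrC e); rewrite -!scalerA. by rewrite !addrA; congr (_ + _); rewrite -!addrA; congr (_ + _); rewrite addrC. Qed.

Lemma far (x y a c : V) (K : set V) : closed K ->
  segment x y `&` K = set0 ->
  exists d : R, 0 < d /\ forall e, 0 < e < d ->
    segment (x + e *: a) (y + e *: c) `&` K = set0.
Proof.
move=> cK dis.
pose P := fun (e : R) (t : R) => ~ K (segf (x + e *: a) (y + e *: c) t).
suff : \forall e \near 0^'+, `[0, 1]%classic `<=` P e.
  move=> /near_right_ex [d [d0 H]]; exists d; split => // e he.
  apply/seteqP; split => // z [[t [ht ->]]] Kz.
  by apply: (H e he t) => //=; rewrite in_itv.
apply: (compact_near_coveringP _).1; first exact: segment_compact.
move=> t0 t01.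
have nK : ~ K (segf x y t0).
  move=> Kz; have : (segment x y `&` K) (segf x y t0).
    by split => //; exists t0; split => //; move: t01 => /=; rewrite in_itv.
  by rewrite dis.
have : nbhs (segf x y t0) (~` K) by apply: open_nbhs_nbhs; split => //; exact: closed_openC.
move=> /nbhs_ballP [r /= r0 Hr].
have r20 : 0 < r / 2 by rewrite divr_gt0.
pose M := 3 * (`|a| + `|c|) + 1.
have M0 : 0 < M by rewrite /M ltr_pwDr // mulr_ge0 // addr_ge0.
have tnear := cvgr_dist_lt _ _ (@segf_cont R x y t0) _ r20.
apply: (filter_pair_set _ _ (P := fun t => `|segf x y t0 - segf x y t| < r / 2 /\ `|t - t0| < 1)
   (P' := fun e => 0 < e < r / 2 / M)).
- move=> t e [h1 h2] /andP [e0 eM]; rewrite /P segf_off.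
  apply: Hr; rewrite -ball_normE /=.
  have hab : `|segf a c t| <= M.
    rewrite /segf; apply: (le_trans (ler_normD _ _)); rewrite !normrZ.
    have h1t : `|1 - t| <= 2.
      have : `|1 - t| <= `|1 - t0| + `|t0 - t| by rewrite (le_trans _ (ler_normD _ _)) // addrA subrK.
      move: t01 => /=; rewrite in_itv /= => /andP [ta tb].
      rewrite distrC in h2 => /le_trans; apply.
      have : `|1 - t0| <= 1 by rewrite ger0_norm ?subr_ge0 // lerBlDr lerDl.
      move=> h; rewrite (le_trans (lerD h (ltW h2))) //; lra.
    have ht : `|t| <= 2.
      move: t01 => /=; rewrite in_itv /= => /andP [ta tb].
      have : `|t| <= `|t0| + `|t - t0| by rewrite (le_trans _ (ler_normD _ _)) // addrC subrK.
      move=> /le_trans; apply; rewrite ger0_norm //; move: (ltW h2); lra.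
    rewrite /M.
    have : `|1 - t| * `|a| + `|t| * `|c| <= 2 * `|a| + 2 * `|c|.
      by apply: lerD; apply: ler_wpM2r.
    move=> /le_trans; apply; have := normr_ge0 a; have := normr_ge0 c; lra.
  rewrite opprD addrA.
  apply: (le_lt_trans (ler_normD _ _)); rewrite normrN normrZ gtr0_norm //.
  have : e * `|segf a c t| < r / 2.
    apply: (le_lt_trans (ler_wpM2l (ltW e0) hab)).
    by rewrite -ltr_pdivlMr.
  move: h1; lra.
- split.
  + apply: filterI; first exact: tnear.
    by apply/nbhs_ballP; exists 1 => //= s; rewrite -ball_normE /= distrC.
  + near=> e; apply/andP; split; first by near: e; exact: nbhs_right_gt.
    near: e; apply: nbhs_right_lt; by rewrite divr_gt0.
Unshelve. all: end_near.
Qed.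
End Far.

Section Geo.
Variable R : realType.
Notation V := 'rV[R]_2.
Definition ev (Q : R -> Prop) := exists d : R, 0 < d /\ forall e, 0 < e < d -> Q e.
Lemma evI (Q1 Q2 : R -> Prop) : ev Q1 -> ev Q2 -> ev (fun e => Q1 e /\ Q2 e).
Proof.
move=> [d1 [d10 H1]] [d2 [d20 H2]]; exists (Num.min d1 d2); split.
  by rewrite lt_min d10.
move=> e /andP [e0]; rewrite lt_min => /andP [e1 e2]; split.
  by apply: H1; rewrite e0.
by apply: H2; rewrite e0.
Qed.
Lemma evW (Q1 Q2 : R -> Prop) : (forall e, 0 < e -> Q1 e -> Q2 e) -> ev Q1 -> ev Q2.
Proof. by move=> H [d [d0 H1]]; exists d; split => // e /andP [e0 ed]; apply: H => //; apply: H1; rewrite e0. Qed.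
Lemma ev_lt (c : R) : 0 < c -> ev (fun e => e < c).
Proof. by move=> c0; exists c; split => // e /andP []. Qed.
Lemma ev_fin (m : nat) (Q : nat -> R -> Prop) :
  (forall k, (k < m)%N -> ev (Q k)) -> ev (fun e => forall k, (k < m)%N -> Q k e).
Proof.
elim: m => [|m IH] H.
  by exists 1; split => // e _ k.
have := evI (IH (fun k hk => H k (leq_trans hk (leqnSn m)))) (H m (ltnSn m)).
apply: evW => e _ [h1 h2] k; rewrite ltnS leq_eqVlt => /orP [/eqP -> //|hk].
exact: h1.
Qed.

Definition cr (x y : V) := c0 x * c1 y - c1 x * c0 y.
Lemma crN (x y : V) : cr (- x) y = - cr x y. Proof. rewrite /cr !cE; ring. Qed.

Lemma sign_lemma (d1 d2 n1 n2 : V) : dot n1 d1 = 0 -> dot n2 d2 = 0 ->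
  0 < cr d1 n1 * cr d2 n2 ->
  (0 < dot d2 n1 -> dot d1 n2 < 0) /\ (dot d2 n1 <= 0 -> 0 <= dot d1 n2).
Proof.
rewrite /cr !dotE.
set p := c0 d1; set q := c1 d1; set u := c0 d2; set v := c1 d2.
set s := c0 n1; set t := c1 n1; set s2 := c0 n2; set t2 := c1 n2.
move=> h1 h2 hc.
have e1 : (u * s + v * t) * (p^+2 + q^+2) = (p * t - q * s) * (p * v - q * u).
  have -> : (u * s + v * t) * (p^+2 + q^+2) = (p * t - q * s) * (p * v - q * u) + (s * p + t * q) * (u * p + v * q) by ring.
  by rewrite h1 mul0r addr0.
have e2 : (p * s2 + q * t2) * (u^+2 + v^+2) = - ((u * t2 - v * s2) * (p * v - q * u)).
  have -> : (p * s2 + q * t2) * (u^+2 + v^+2) = - ((u * t2 - v * s2) * (p * v - q * u)) + (s2 * u + t2 * v) * (p * u + q * v) by ring.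
  by rewrite h2 mul0r addr0.
set a1 := p * t - q * s in e1 hc; set a2 := u * t2 - v * s2 in e2 hc.
set X := p * v - q * u in e1 e2.
have L1 : 0 < p^+2 + q^+2.
  rewrite lt_neqAle addr_ge0 ?sqr_ge0 // andbT eq_sym paddr_eq0 ?sqr_ge0 // !sqrf_eq0.
  apply/negP => /andP [/eqP p0 /eqP q0]; move: hc; rewrite /a1 p0 q0; lra.
have L2 : 0 < u^+2 + v^+2.
  rewrite lt_neqAle addr_ge0 ?sqr_ge0 // andbT eq_sym paddr_eq0 ?sqr_ge0 // !sqrf_eq0.
  apply/negP => /andP [/eqP p0 /eqP q0]; move: hc; rewrite /a2 p0 q0; lra.
rewrite -/(u * s + v * t) -/(p * s2 + q * t2) in e1 e2 *.
split.
- move=> ha; have : 0 < a1 * X by rewrite -e1 mulr_gt0.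
  move=> h; have : 0 < a2 * X by nra.
  move=> h'; have : (p * s2 + q * t2) * (u ^+ 2 + v ^+ 2) < 0 by rewrite e2 oppr_lt0.
  by rewrite pmulr_llt0.
- move=> ha; have : a1 * X <= 0 by rewrite -e1 mulr_le0_ge0 // ltW.
  move=> h; have : a2 * X <= 0 by nra.
  move=> h'; have : 0 <= (p * s2 + q * t2) * (u ^+ 2 + v ^+ 2) by rewrite e2 oppr_ge0.
  by rewrite pmulr_lge0.
Qed.
End Geo.

Section Vert.
Variable R : realType.
Notation V := 'rV[R]_2.
Implicit Types (A B C x y a c n z q : V).

Lemma offset_id x y a c B e t :
  (1-t)*:(x + e*:a) + t*:(y + e*:c) - B =
  (1-t)*:(x - B) + t*:(y - B) + e*:((1-t)*:a + t*:c).
Proof. vecring. Qed.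

Lemma dot_offset x y a c B n e t :
  dot ((1-t)*:(x + e*:a) + t*:(y + e*:c) - B) n =
  (1-t) * dot (x - B) n + t * dot (y - B) n + e * ((1-t) * dot a n + t * dot c n).
Proof. by rewrite offset_id !dotL. Qed.

Lemma pos_comb (X Y : R) t : 0 < X -> 0 < Y -> 0 <= t <= 1 -> 0 < (1-t) * X + t * Y.
Proof. move=> hx hy /andP [t0 t1]; nra. Qed.

Lemma seg_line A B n q : dot n (B - A) = 0 -> segment A B q -> dot (q - B) n = 0.
Proof.
move=> h [s [_ ->]].
have -> : (1 - s) *: A + s *: B - B = (s - 1) *: (B - A) by vecring.
by rewrite dotZl dotC h mulr0.
Qed.


Lemma seg_dir B C n q : segment B C q -> exists s, 0 <= s <= 1 /\ dot (q - B) n = s * dot (C - B) n.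
Proof.
move=> [s [hs ->]]; exists s; split => //.
have -> : (1 - s) *: B + s *: C - B = s *: (C - B) by vecring.
by rewrite dotZl.
Qed.

Lemma gvl A B C (n1 n2 : V) a (lam : R) :
  dot n1 n1 = 1 -> dot n2 n2 = 1 -> dot n1 (B - A) = 0 -> dot n2 (C - B) = 0 ->
  0 < cr (B - A) n1 * cr (C - B) n2 -> 0 < 1 + dot n1 n2 ->
  0 <= lam < 1 -> 0 < dot a n1 ->
  ev (fun e => forall z, segment ((1-lam)*:A + lam*:B + e*:a) (B + e*:(n1+n2)) z ->
        ~ segment A B z /\ ~ segment B C z).
Proof.
move=> u1 u2 o1 o2 hcons nf /andP [l0 l1] an.
have xB : (1 - lam) *: A + lam *: B - B = (1 - lam) *: (A - B) by vecring.
have dx1 : dot ((1 - lam) *: A + lam *: B - B) n1 = 0.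
  by rewrite xB dotZl -(opprB B A) dotNl dotC o1 oppr0 mulr0.
have BB : B - B = 0 by rewrite subrr.
have wn1 : dot (n1 + n2) n1 = 1 + dot n1 n2 by rewrite dotDl u1 dotC.
have wn2 : dot (n1 + n2) n2 = 1 + dot n1 n2 by rewrite dotDl u2 addrC.
have [sg1 sg2] := sign_lemma o1 o2 hcons.
have E1 : forall e, 0 < e -> forall z, segment ((1-lam)*:A + lam*:B + e*:a) (B + e*:(n1+n2)) z -> ~ segment A B z.
  move=> e e0 z [t [ht ->]] /(seg_line o1); rewrite dot_offset dx1 BB dot0l.
  move=> h; suff : 0 < e * ((1 - t) * dot a n1 + t * dot (n1 + n2) n1) by move: h; lra.
  by rewrite mulr_gt0 // pos_comb // wn1.
have [al|al] := leP (dot (C - B) n1) 0.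
- exists 1; split => // e /andP [e0 _] z hz; split; first exact: E1 hz.
  move: hz => [t [ht ->]] /(seg_dir n1) [s [hs]]; rewrite dot_offset dx1 BB dot0l => h.
  suff : 0 < e * ((1 - t) * dot a n1 + t * dot (n1 + n2) n1).
    have : s * dot (C - B) n1 <= 0 by rewrite mulr_ge0_le0 //; case/andP: hs.
    move: h; lra.
  by rewrite mulr_gt0 // pos_comb // wn1.
- have be := sg1 al.
  set K := (1 - lam) * - dot (B - A) n2.
  have K0 : 0 < K by rewrite mulr_gt0 ?subr_gt0 // oppr_gt0.
  exists (K / (`|dot a n2| + 1)); split; first by rewrite divr_gt0 // ltr_pwDr.
  move=> e /andP [e0 eK] z hz; split; first exact: E1 hz.
  have dx2 : dot ((1 - lam) *: A + lam *: B - B) n2 = K.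
    by rewrite xB dotZl -(opprB B A) dotNl /K.
  move: hz => [t [ht ->]] /(seg_dir n2) [s [hs]].
  rewrite dot_offset dx2 BB dot0l (dotC (C - B)) o2 mulr0 mulr0 addr0 => h.
  have a2 : K + e * dot a n2 > 0.
    have : e * (`|dot a n2| + 1) < K by rewrite -ltr_pdivlMr // ltr_pwDr.
    have : - dot a n2 <= `|dot a n2| by rewrite -normrN ler_norm.
    move=> hn hk; nra.
  have : 0 < (1 - t) * (K + e * dot a n2) + t * (e * dot (n1 + n2) n2).
    by apply: pos_comb => //; rewrite mulr_gt0 // wn2.
  move: h; lra.
Qed.
End Vert.

Section NoFold.
Variable R : realType.
Notation V := 'rV[R]_2.
Lemma nofold (A B C n1 n2 : V) :
  dot n1 n1 = 1 -> dot n2 n2 = 1 -> dot n1 (B - A) = 0 -> dot n2 (C - B) = 0 ->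
  0 < cr (B - A) n1 * cr (C - B) n2 ->
  segment A B `&` segment B C = [set B] -> 0 < 1 + dot n1 n2.
Proof.
move=> u1 u2 o1 o2 hc hI.
rewrite ltNge; apply/negP => hle.
move: u1 u2 o1 o2 hc hle; rewrite /cr !dotE !c0B !c1B.
set s := c0 n1; set t := c1 n1; set s2 := c0 n2; set t2 := c1 n2.
move=> u1 u2 o1 o2 hc hle.
have hsq : (s + s2)^+2 + (t + t2)^+2 <= 0.
  have -> : (s + s2)^+2 + (t + t2)^+2 = (s * s + t * t) + (s2 * s2 + t2 * t2) + 2 * (s * s2 + t * t2) by ring.
  rewrite u1 u2; lra.
have hs1 := sqr_ge0 (s + s2); have hs2 := sqr_ge0 (t + t2).
have : (s + s2)^+2 = 0 by lra.
move/eqP; rewrite sqrf_eq0 => /eqP es0.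
have : (t + t2)^+2 = 0 by lra.
move/eqP; rewrite sqrf_eq0 => /eqP et0.
have es : s2 = - s by lra.
have et : t2 = - t by lra.
rewrite es et in o2 hc.
set p := c0 B - c0 A in o1 hc; set q := c1 B - c1 A in o1 hc.
set u := c0 C - c0 B in o2 hc; set v := c1 C - c1 B in o2 hc.
set m1 := p * t - q * s in hc.
have ep : p = m1 * t.
  have : p - m1 * t = s * (s * p + t * q) + p * (1 - (s * s + t * t)) by rewrite /m1; ring.
  by rewrite o1 u1 subrr mulr0 mulr0 addr0 => /eqP; rewrite subr_eq0 => /eqP.
have eq : q = - (m1 * s).
  have : q + m1 * s = t * (s * p + t * q) + q * (1 - (s * s + t * t)) by rewrite /m1; ring.
  by rewrite o1 u1 subrr mulr0 mulr0 addr0 => /eqP; rewrite addr_eq0 => /eqP.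
set m2 := u * t - v * s.
have o2' : s * u + t * v = 0 by move: o2; rewrite !mulNr -opprD => /eqP; rewrite oppr_eq0 => /eqP.
have eu : u = m2 * t.
  have : u - m2 * t = s * (s * u + t * v) + u * (1 - (s * s + t * t)) by rewrite /m2; ring.
  by rewrite o2' u1 subrr mulr0 mulr0 addr0 => /eqP; rewrite subr_eq0 => /eqP.
have ev : v = - (m2 * s).
  have : v + m2 * s = t * (s * u + t * v) + v * (1 - (s * s + t * t)) by rewrite /m2; ring.
  by rewrite o2' u1 subrr mulr0 mulr0 addr0 => /eqP; rewrite addr_eq0 => /eqP.
have hc' : m1 * m2 < 0.
  have -> : m1 * m2 = - (m1 * (u * - t - v * - s)) by rewrite /m2; ring.
  by rewrite oppr_lt0.
have d0 : m1 - m2 != 0.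
  apply/eqP => h; have : m1 = m2 by lra.
  by move=> e; move: hc'; rewrite e; nra.
set lam := m1 / (m1 - m2).
have Q : (1 - lam) *: A + lam *: B = (1 - lam) *: B + lam *: C.
  apply: vecP; rewrite !cE.
  - have : c0 A = c0 B - p by rewrite /p; ring.
    move=> ->; have : c0 C = c0 B + u by rewrite /u; ring.
    move=> ->; rewrite ep eu /lam; field; exact: d0.
  - have : c1 A = c1 B - q by rewrite /q; ring.
    move=> ->; have : c1 C = c1 B + v by rewrite /v; ring.
    move=> ->; rewrite eq ev /lam; field; exact: d0.
have hl : lam * (m1 - m2) = m1 by rewrite /lam mulfVK.
have sq0 : 0 < (m1 - m2)^+2 by rewrite lt_neqAle eq_sym sqrf_eq0 d0 sqr_ge0.
have l0 : 0 < lam.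
  have : lam * (m1 - m2)^+2 = m1^+2 - m1 * m2 by rewrite expr2 mulrA hl; ring.
  move=> h; have : 0 < lam * (m1 - m2)^+2 by rewrite h; nra.
  by rewrite pmulr_lgt0.
have l1 : 0 < 1 - lam.
  have : (1 - lam) * (m1 - m2)^+2 = m2^+2 - m1 * m2.
    rewrite mulrBl mul1r expr2 mulrA hl; ring.
  move=> h; have : 0 < (1 - lam) * (m1 - m2)^+2 by rewrite h; nra.
  by rewrite pmulr_lgt0.
have : (segment A B `&` segment B C) ((1 - lam) *: B + lam *: C).
  split; first by rewrite -Q; exists lam; split => //; rewrite (ltW l0) /=; lra.
  by exists lam; split => //; rewrite (ltW l0) /=; lra.
rewrite hI => /= QB.
have : c0 ((1 - lam) *: B + lam *: C) = c0 B by rewrite QB.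
have : c1 ((1 - lam) *: B + lam *: C) = c1 B by rewrite QB.
rewrite !cE.
have -> : c0 C = c0 B + u by rewrite /u; ring.
have -> : c1 C = c1 B + v by rewrite /v; ring.
move=> h1 h0.
have u0 : lam * u = 0 by move: h0; lra.
have v0 : lam * v = 0 by move: h1; lra.
move: u0 v0; rewrite eu ev => /eqP; rewrite mulf_eq0 (gt_eqF l0) /= mulf_eq0 => /orP [/eqP m20|/eqP t0].
  by move: hc'; rewrite m20 mulr0 ltxx.
move=> /eqP; rewrite mulf_eq0 (gt_eqF l0) /= oppr_eq0 mulf_eq0 => /orP [/eqP m20|/eqP s0].
  by move: hc'; rewrite m20 mulr0 ltxx.
by move: u1; rewrite s0 t0 mul0r addr0 => /esym/eqP; rewrite oner_eq0.
Qed.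
End NoFold.

Section Poly.
Variable R : realType.
Notation V := 'rV[R]_2.
Variables (n : nat) (p : nat -> V).
Hypothesis hP : simple_closed_polygon n p.
Definition E k := segment (p k.-1) (p k).
Definition nxt i := if i == n then 1%N else i.+1.

Lemma n3 : (3 <= n)%N. Proof. by case: hP. Qed.
Lemma pper k : p (k + n)%N = p k. Proof. by case: hP => _ h _ _; apply: h. Qed.
Lemma pinj i j : (i < n)%N -> (j < n)%N -> p i = p j -> i = j.
Proof. by case: hP => _ _ h _; apply: h. Qed.
Lemma pinter i j : (1 <= i <= n)%N -> (1 <= j <= n)%N -> (i < j)%N ->
  E i `&` E j = if j == i.+1 then [set p i]
                else if (i == 1%N) && (j == n) then [set p 0%N] else set0.
Proof. by case: hP => _ _ _ h; apply: h. Qed.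
Lemma pn0 : p n = p 0. Proof. by rewrite -(pper 0) add0n. Qed.

Lemma nxt_range i : (1 <= i <= n)%N -> (1 <= nxt i <= n)%N.
Proof. have := n3; rewrite /nxt; case: eqP => [->|]; lia. Qed.
Lemma p_nxt i : (1 <= i <= n)%N -> p (nxt i) = p i.+1.
Proof. rewrite /nxt; case: eqP => [-> _|//]; by rewrite -(pper 1) add1n. Qed.
Lemma p_nxt_pred i : (1 <= i <= n)%N -> p (nxt i).-1 = p i.
Proof. rewrite /nxt; case: eqP => [-> _|//]; by rewrite pn0. Qed.
Lemma nxt_inj i k : (1 <= i <= n)%N -> (1 <= k <= n)%N -> nxt i = nxt k -> i = k.
Proof. have := n3; rewrite /nxt; case: eqP; case: eqP; lia. Qed.
Lemma nxt_ne i : (1 <= i <= n)%N -> nxt i <> i.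
Proof. have := n3; rewrite /nxt; case: eqP; lia. Qed.
Lemma nxt2_ne i : (1 <= i <= n)%N -> nxt (nxt i) <> i.
Proof.
move=> hi; have h3 := n3; rewrite /nxt; have [->|hin] := eqVneq i n.
  rewrite ?eqxx; have -> : (1 == n) = false by apply/eqP; lia.
  lia.
rewrite ?(negbTE hin); have [e|ne] := eqVneq i.+1 n; first lia.
rewrite ?(negbTE ne); lia.
Qed.
Lemma pdist i : (1 <= i <= n)%N -> p i.-1 <> p i.
Proof.
move=> hi; have := n3 => h3.
have [ein|nin] := eqVneq i n.
  rewrite ein pn0 => /(pinj) h; have : n.-1 = 0%N by apply: h; lia.
  lia.
move=> /(pinj) h; have : i.-1 = i by apply: h; lia.
lia.
Qed.
Lemma E_nxt i : (1 <= i <= n)%N -> E (nxt i) = segment (p i) (p (nxt i)).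
Proof. by move=> hi; rewrite /E p_nxt_pred. Qed.

Lemma inter3 i k q : (1 <= i <= n)%N -> (1 <= k <= n)%N -> i <> k -> E i q -> E k q ->
  (q = p i /\ k = nxt i) \/ (q = p i.-1 /\ i = nxt k).
Proof.
move=> hi hk ik Ei Ek.
have [lik|lki] : (i < k)%N \/ (k < i)%N by lia.
- have := pinter hi hk lik.
  have : (E i `&` E k) q by [].
  move=> /[swap] ->.
  case: eqP => [-> /= ->|nk]; first by left; split => //; rewrite /nxt; case: eqP => //; lia.
  case: andP => [[/eqP i1 /eqP kn] /= ->|_ //].
  right; split; first by rewrite i1.
  by rewrite kn /nxt eqxx.
- have := pinter hk hi lki.
  have : (E k `&` E i) q by [].
  move=> /[swap] ->.
  case: eqP => [-> /= ->|nk]; first by right; split => //; rewrite /nxt; case: eqP => //; lia.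
  case: andP => [[/eqP k1 /eqP iin] /= ->|_ //].
  left; split; first by rewrite iin pn0.
  by rewrite k1 iin /nxt eqxx.
Qed.

Lemma inter_nxt i : (1 <= i <= n)%N -> E i `&` E (nxt i) = [set p i].
Proof.
move=> hi; have hj := nxt_range hi.
apply/seteqP; split => q.
- move=> [Ei Ej]; case: (inter3 hi hj (fun h => nxt_ne hi (esym h)) Ei Ej) => [[-> _] //|[_ h]].
  by case: (nxt2_ne hi); rewrite -h.
- move=> /= ->; split.
    by exists 1; split; [rewrite ler01 lexx|rewrite subrr scale0r add0r scale1r].
  by rewrite /E p_nxt_pred //; exists 0; split; [rewrite lexx ler01|rewrite subr0 scale1r scale0r addr0].
Qed.
End Poly.

Section Rev.
Variable R : realType.
Notation V := 'rV[R]_2.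
Lemma crNr (x y : V) : cr x (- y) = - cr x y. Proof. rewrite /cr !cE; ring. Qed.
Lemma seg_sym (x y : V) : segment x y = segment y x.
Proof.
by apply/seteqP; split => z [t [ht ->]]; exists (1 - t); (split; first lra); vecring.
Qed.
Lemma gvl_rev (A B C n1 n2 c : V) (lam : R) :
  dot n1 n1 = 1 -> dot n2 n2 = 1 -> dot n1 (B - A) = 0 -> dot n2 (C - B) = 0 ->
  0 < cr (B - A) n1 * cr (C - B) n2 -> 0 < 1 + dot n1 n2 ->
  0 <= lam < 1 -> 0 < dot c n2 ->
  ev (fun e => forall z, segment (B + e*:(n1+n2)) ((1-lam)*:C + lam*:B + e*:c) z ->
        ~ segment A B z /\ ~ segment B C z).
Proof.
move=> u1 u2 o1 o2 hc nf hl cn.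
have o2' : dot n2 (B - C) = 0 by rewrite -opprB dotNr o2 oppr0.
have o1' : dot n1 (A - B) = 0 by rewrite -opprB dotNr o1 oppr0.
have hc' : 0 < cr (B - C) n2 * cr (A - B) n1.
  by rewrite -(opprB C B) -(opprB B A) !crN mulrNN mulrC.
have nf' : 0 < 1 + dot n2 n1 by rewrite dotC.
have := gvl u2 u1 o2' o1' hc' nf' hl cn.
apply: evW => e _ H z hz; have := H z; rewrite seg_sym (addrC n2 n1) => /(_ hz) [h1 h2].
by split; rewrite seg_sym.
Qed.
End Rev.

Section Avoid.
Variable R : realType.
Notation V := 'rV[R]_2.
Variables (n : nat) (p : nat -> V).
Hypothesis hP : simple_closed_polygon n p.
Notation E := (E p).
Notation nxt := (nxt n).
Notation P := (polygon n p).

Lemma comb_end (A B : V) l : A <> B -> (1 - l) *: A + l *: B = B -> l = 1.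
Proof.
move=> AB h; have : (1 - l) *: (A - B) = (1 - l) *: A + l *: B - B by vecring.
rewrite h subrr.
move/eqP; rewrite scaler_eq0 => /orP [/eqP h0|e]; first lra.
by exfalso; apply: AB; apply/eqP; rewrite -subr_eq0.
Qed.
Lemma comb_start (A B : V) l : A <> B -> (1 - l) *: A + l *: B = A -> l = 0.
Proof.
move=> AB h; have : l *: (B - A) = (1 - l) *: A + l *: B - A by vecring.
rewrite h subrr.
move/eqP; rewrite scaler_eq0 => /orP [/eqP h0|e]; first lra.
by exfalso; apply: AB; apply/esym/eqP; rewrite -subr_eq0.
Qed.
Lemma subseg_l (A B : V) l q : segment ((1 - l) *: A + l *: B) B q -> 0 <= l <= 1 ->
  exists m, l <= m <= 1 /\ q = (1 - m) *: A + m *: B.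
Proof.
move=> [s [/andP [s0 s1] ->]] /andP [l0 l1]; exists (1 - (1 - s) * (1 - l)).
split; first by apply/andP; split; nra.
vecring.
Qed.
Lemma subseg_r (A B : V) l q : segment A ((1 - l) *: A + l *: B) q -> 0 <= l <= 1 ->
  exists m, 0 <= m <= l /\ q = (1 - m) *: A + m *: B.
Proof.
move=> [s [/andP [s0 s1] ->]] /andP [l0 l1]; exists (s * l).
split; first by apply/andP; split; nra.
vecring.
Qed.
Lemma Pmem z : P z -> exists k, (1 <= k <= n)%N /\ E k z.
Proof. by case=> k hk hz; exists k. Qed.

Lemma relint_notE i k b : (1 <= i <= n)%N -> (1 <= k <= n)%N -> k <> i ->
  relint_segment (p i.-1) (p i) b -> ~ E k b.
Proof.
move=> hi hk ki [l [hl ->]] Ek.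
have Ei : E i ((1 - l) *: p i.-1 + l *: p i) by exists l; split => //; case/andP: hl => *; apply/andP; split; apply: ltW.
case: (inter3 hP hi hk (fun h => ki (esym h)) Ei Ek) => [[h _]|[h _]].
  by have l1 := comb_end (pdist hP hi) h; case/andP: hl; lra.
by have l1 := comb_start (pdist hP hi) h; case/andP: hl; lra.
Qed.

Lemma avoidP (S : R -> set V) :
  (forall k, (1 <= k <= n)%N -> ev (fun e => forall z, S e z -> ~ E k z)) ->
  ev (fun e => forall z, S e z -> ~ P z).
Proof.
move=> H.
have := @ev_fin R n.+1 (fun k e => (1 <= k <= n)%N -> forall z, S e z -> ~ E k z).
case.
  move=> k hk; have [hk'|hk'] := boolP (1 <= k <= n)%N.
    by apply: evW (H k hk') => e _ h _.
  by exists 1; split => // e _ /negP.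
move=> d [d0 Hd]; exists d; split => // e he z Sz /Pmem [k [hk Ek]].
have : (k < n.+1)%N by lia.
by move=> /(Hd e he k) /(_ hk z Sz).
Qed.

Lemma far_edge (x y a c : V) k : segment x y `&` E k = set0 ->
  ev (fun e => forall z, segment (x + e *: a) (y + e *: c) z -> ~ E k z).
Proof.
move=> h; have [d [d0 H]] := far a c (@seg_closed R _ _) h.
exists d; split => // e he z hz Ez.
have : (segment (x + e *: a) (y + e *: c) `&` E k) z by [].
by rewrite H.
Qed.
End Avoid.

Section Avoid2.
Variable R : realType.
Notation V := 'rV[R]_2.
Variables (n : nat) (p : nat -> V).
Hypothesis hP : simple_closed_polygon n p.
Notation E := (E p).
Notation nxt := (nxt n).
Notation P := (polygon n p).

Lemma avoid_a i (n1 n2 v b : V) : (1 <= i <= n)%N ->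
  dot n1 n1 = 1 -> dot n2 n2 = 1 -> dot n1 (p i - p i.-1) = 0 ->
  dot n2 (p (nxt i) - p i) = 0 ->
  0 < cr (p i - p i.-1) n1 * cr (p (nxt i) - p i) n2 ->
  relint_segment (p i.-1) (p i) b -> 0 < dot v n1 ->
  ev (fun e => forall z, segment (b + e *: v) (p i + e *: (n1 + n2)) z -> ~ P z).
Proof.
move=> hi u1 u2 o1 o2 hc hb hv.
have hj := nxt_range hP hi.
have hI : segment (p i.-1) (p i) `&` segment (p i) (p (nxt i)) = [set p i].
  by rewrite -(E_nxt hP hi); exact: (inter_nxt hP hi).
have nf := nofold u1 u2 o1 o2 hc hI.
have hb' := hb; case: hb' => l [/andP [l0 l1] eb].
have G := gvl (lam := l) u1 u2 o1 o2 hc nf (ltac:(apply/andP; split => //; exact: ltW)) hv.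
rewrite -eb in G.
apply: avoidP => k hk.
have [->|ki] := eqVneq k i.
  by apply: evW G => e _ H z /H [].
have [->|kj] := eqVneq k (nxt i).
  by apply: evW G => e _ H z /H []; rewrite /E p_nxt_pred.
apply: far_edge; apply/seteqP; split => // q [Hq Ek].
rewrite eb in Hq.
have [m [/andP [lm m1] eq]] := subseg_l Hq (ltac:(apply/andP; split; apply: ltW => //)).
have Ei : E i q by exists m; split => //; apply/andP; split => //; apply: le_trans lm; apply: ltW.
case: (inter3 hP hi hk (fun h => (negP ki) (introT eqP (esym h))) Ei Ek) => [[_ h]|[h _]]; first by move/eqP: kj; rewrite h.
have := comb_start (pdist hP hi) (esym (etrans (esym h) eq)); lra.
Qed.

Lemma avoid_a' i (n1 n2 c b : V) : (1 <= i <= n)%N ->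
  dot n1 n1 = 1 -> dot n2 n2 = 1 -> dot n1 (p i - p i.-1) = 0 ->
  dot n2 (p (nxt i) - p i) = 0 ->
  0 < cr (p i - p i.-1) n1 * cr (p (nxt i) - p i) n2 ->
  relint_segment (p (nxt i).-1) (p (nxt i)) b -> 0 < dot c n2 ->
  ev (fun e => forall z, segment (p i + e *: (n1 + n2)) (b + e *: c) z -> ~ P z).
Proof.
move=> hi u1 u2 o1 o2 hc hb hv.
have hj := nxt_range hP hi.
have hI : segment (p i.-1) (p i) `&` segment (p i) (p (nxt i)) = [set p i].
  by rewrite -(E_nxt hP hi); exact: (inter_nxt hP hi).
have nf := nofold u1 u2 o1 o2 hc hI.
have hb' := hb; case: hb' => m [/andP [m0 m1]].
rewrite (p_nxt_pred hP hi) => eb.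
have eb' : b = (1 - (1 - m)) *: p (nxt i) + (1 - m) *: p i by rewrite eb; vecring.
have G := gvl_rev (lam := 1 - m) u1 u2 o1 o2 hc nf (ltac:(apply/andP; split; lra)) hv.
rewrite -eb' in G.
apply: avoidP => k hk.
have [->|ki] := eqVneq k i.
  by apply: evW G => e _ H z /H [].
have [->|kj] := eqVneq k (nxt i).
  by apply: evW G => e _ H z /H []; rewrite /E p_nxt_pred.
apply: far_edge; apply/seteqP; split => // q [Hq Ek].
rewrite eb in Hq.
have [mu [/andP [mu0 mum] eq]] := subseg_r Hq (ltac:(apply/andP; split; apply: ltW => //)).
have Ej : E (nxt i) q.
  rewrite /E p_nxt_pred //; exists mu; split => //; apply/andP; split => //.
  by apply: le_trans mum _; apply: ltW.
case: (inter3 hP hj hk (fun h => (negP kj) (introT eqP (esym h))) Ej Ek) => [[h _]|[_ h]].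
  have neq : p i <> p (nxt i) by move=> e; apply: (pdist hP hj); rewrite (p_nxt_pred hP hi); exact: e.
  have := comb_end neq (etrans (esym eq) h); lra.
by move: ki; rewrite (nxt_inj hP hi hk h) eqxx.
Qed.
End Avoid2.

Section Avoid3.
Variable R : realType.
Notation V := 'rV[R]_2.
Variables (n : nat) (p : nat -> V).
Hypothesis hP : simple_closed_polygon n p.
Notation E := (E p).
Notation nxt := (nxt n).
Notation P := (polygon n p).

Definition okn (nn : nat -> V) k := dot (nn k) (nn k) = 1 /\ dot (nn k) (p k - p k.-1) = 0.
Definition consv (nn : nat -> V) i :=
  0 < cr (p i - p i.-1) (nn i) * cr (p (nxt i) - p i) (nn (nxt i)).

Lemma nf_at (nn : nat -> V) i : (1 <= i <= n)%N -> okn nn i -> okn nn (nxt i) -> consv nn i ->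
  0 < 1 + dot (nn i) (nn (nxt i)).
Proof.
move=> hi [u1 o1] [u2 o2] hc.
have hI : segment (p i.-1) (p i) `&` segment (p i) (p (nxt i)) = [set p i].
  by rewrite -(E_nxt hP hi); exact: (inter_nxt hP hi).
by apply: nofold u1 u2 o1 _ hc hI; rewrite -(p_nxt_pred hP hi).
Qed.

Lemma avoid_b (nn : nat -> V) i : (1 <= i <= n)%N ->
  okn nn i -> okn nn (nxt i) -> okn nn (nxt (nxt i)) -> consv nn i -> consv nn (nxt i) ->
  ev (fun e => forall z, segment (p i + e *: (nn i + nn (nxt i)))
                               (p (nxt i) + e *: (nn (nxt i) + nn (nxt (nxt i)))) z -> ~ P z).
Proof.
move=> hi oi oj ol ci cj.
have hj := nxt_range hP hi; have hl := nxt_range hP hj.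
have nfi := nf_at hi oi oj ci; have nfj := nf_at hj oj ol cj.
have pj := p_nxt_pred hP hi.
have pl := p_nxt_pred hP hj.
set j := nxt i in hj oj ol ci cj nfi nfj pj pl *; set l := nxt j in hl ol cj nfj pl *.
case: oi => [u1 o1]; case: oj => [u2 o2]; case: ol => [u3 o3].
have o2' : dot (nn j) (p j - p i) = 0 by rewrite -pj.
have o3' : dot (nn l) (p l - p j) = 0 by rewrite -pl.
have G1 := gvl_rev (lam := 0) (c := nn j + nn l) u1 u2 o1 o2' ci nfi
   (ltac:(by rewrite lexx ltr01)) (ltac:(by rewrite dotDl u2 dotC)).
have e1 : (1 - 0) *: p j + 0 *: p i = p j by vecring.
rewrite e1 in G1.
have cj' : 0 < cr (p j - p j.-1) (nn j) * cr (p l - p j) (nn l) by [].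
have G2 := gvl (lam := 0) (a := nn i + nn j) u2 u3 o2 o3' cj nfj
   (ltac:(by rewrite lexx ltr01)) (ltac:(by rewrite dotDl u2 addrC)).
have e2 : (1 - 0) *: p j.-1 + 0 *: p j = p i by rewrite pj; vecring.
rewrite e2 in G2.
apply: avoidP => k hk.
have [->|ki] := eqVneq k i.
  by apply: evW G1 => e _ H z /H [].
have [->|kj] := eqVneq k j.
  by apply: evW G1 => e _ H z /H []; rewrite /E pj.
have [->|kl] := eqVneq k l.
  by apply: evW G2 => e _ H z /H []; rewrite /E pl.
apply: far_edge; apply/seteqP; split => // q [Hq Ek].
have Ej : E j q by rewrite /E pj.
case: (inter3 hP hj hk (fun h => (negP kj) (introT eqP (esym h))) Ej Ek) => [[_ h]|[_ h]].
  by move/eqP: kl; rewrite h.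
by move: ki; rewrite (nxt_inj hP hi hk h) eqxx.
Qed.
End Avoid3.

Section Sides.
Variable R : realType.
Notation V := 'rV[R]_2.
Variables (n : nat) (p : nat -> V).
Hypothesis hP : simple_closed_polygon n p.
Notation E := (E p).
Notation nxt := (nxt n).
Notation P := (polygon n p).

Definition Side (Q : set V -> Prop) (z : V) := ~ P z /\ Q (connected_component (~` P) z).

Lemma cc_eq (S : set V) x y : connected S -> S `<=` ~` P -> S x -> S y ->
  connected_component (~` P) x = connected_component (~` P) y.
Proof.
move=> Sc SP Sx Sy; apply: same_connected_component.
exact: (connected_component_max Sx SP Sc).
Qed.

Lemma side_tr Q (S : set V) x y : connected S -> S `<=` ~` P -> S x -> S y ->
  Side Q x -> Side Q y.
Proof. move=> Sc SP Sx Sy [_ hQ]; split; first exact: SP. by rewrite -(cc_eq Sc SP Sx Sy). Qed.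

Variables (nn : nat -> V) (Q : set V -> Prop).
Hypothesis hok : forall k, (1 <= k <= n)%N -> okn p nn k.
Hypothesis hside : forall k, (1 <= k <= n)%N -> forall b, relint_segment (p k.-1) (p k) b ->
  ev (fun e => Side Q (b + e *: nn k)).

Lemma conn k b v : (1 <= k <= n)%N -> relint_segment (p k.-1) (p k) b -> 0 < dot v (nn k) ->
  ev (fun e => segment (b + e *: v) (b + e *: nn k) `<=` ~` P /\ Side Q (b + e *: nn k)).
Proof.
move=> hk hb hv; apply: evI; last exact: hside.
have [u1 o1] := hok hk.
have bE : E k b by case: hb => l [/andP [l0 l1] ->]; exists l; split => //; apply/andP; split; apply: ltW.
have db : dot (b - p k) (nn k) = 0 by apply: seg_line bE.
have : ev (fun e => forall z, segment (b + e *: v) (b + e *: nn k) z -> ~ P z).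
  apply: avoidP => k' hk'.
  have [->|kk] := eqVneq k' k.
    exists 1; split => // e /andP [e0 _] z [t [ht ->]] /(seg_line o1).
    rewrite dot_offset db !mulr0 add0r u1 => h.
    have : 0 < e * ((1 - t) * dot v (nn k) + t * 1).
      by rewrite mulr_gt0 // pos_comb.
    by rewrite -h add0r ltxx.
  apply: far_edge; apply/seteqP; split => // q [[t [_ ->]] Ek].
  move: Ek; have -> : (1 - t) *: b + t *: b = b by vecring.
  exact: (relint_notE hP hk hk' (fun h => (negP kk) (introT eqP h)) hb).
by apply: evW => e _ H z /H.
Qed.

Lemma seg_side (S : set V) b v e k : (1 <= k <= n)%N -> connected S -> S `<=` ~` P -> S (b + e *: v) ->
  segment (b + e *: v) (b + e *: nn k) `<=` ~` P -> Side Q (b + e *: nn k) -> S `<=` Side Q.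
Proof.
move=> hk Sc SP Sbv C hs z Sz.
have hs' : Side Q (b + e *: v).
  apply: (side_tr (S := segment (b + e *: v) (b + e *: nn k)) (@seg_connected R _ _) C _ _ hs).
  - by exists 1; split; [rewrite ler01 lexx | vecring].
  - by exists 0; split; [rewrite ler01 lexx | vecring].
exact: side_tr Sc SP Sbv Sz hs'.
Qed.

Lemma gen_a i b v : (1 <= i <= n)%N -> consv n p nn i ->
  relint_segment (p i.-1) (p i) b -> 0 < dot v (nn i) ->
  ev (fun e => segment (b + e *: v) (p i + e *: (nn i + nn (nxt i))) `<=` Side Q).
Proof.
move=> hi hc hb hv.
have hj := nxt_range hP hi.
have [u1 o1] := hok hi; have [u2 o2] := hok hj.
have o2' : dot (nn (nxt i)) (p (nxt i) - p i) = 0 by rewrite -(p_nxt_pred hP hi).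
have A := avoid_a hP hi u1 u2 o1 o2' hc hb hv.
have C := conn hi hb hv.
apply: evW (evI A C) => e _ [HA [HC hs]].
apply: (seg_side hi (@seg_connected R _ _) HA _ HC hs).
by exists 0; split; [rewrite lexx ler01 | vecring].
Qed.

Lemma gen_b i : (1 <= i <= n)%N -> consv n p nn i -> consv n p nn (nxt i) ->
  ev (fun e => segment (p i + e *: (nn i + nn (nxt i)))
                       (p (nxt i) + e *: (nn (nxt i) + nn (nxt (nxt i)))) `<=` Side Q).
Proof.
move=> hi ci cj.
have hj := nxt_range hP hi; have hl := nxt_range hP hj.
have A := avoid_b hP hi (hok hi) (hok hj) (hok hl) ci cj.
have nfi := nf_at hP hi (hok hi) (hok hj) ci.
have nfj := nf_at hP hj (hok hj) (hok hl) cj.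
have pj := p_nxt_pred hP hi.
set j := nxt i in hj hl A nfi nfj pj *; set l := nxt j in hl A nfj *.
set m := (1 - 2^-1) *: p j.-1 + 2^-1 *: p j.
have hm : relint_segment (p j.-1) (p j) m.
  exists 2^-1; split => //; apply/andP; split; [by rewrite invr_gt0 | by rewrite invf_lt1 // ltr1n].
set v := (1 - 2^-1) *: (nn i + nn j) + 2^-1 *: (nn j + nn l).
have [u2 _] := hok hj.
have hv : 0 < dot v (nn j).
  rewrite /v !dotL u2 (dotC (nn l)).
  have h2 : 0 < (2^-1 : R) by rewrite invr_gt0.
  have -> : 1 - 2^-1 = (2^-1 : R) by field.
  nra.
have C := conn hj hm hv.
apply: evW (evI A C) => e _ [HA [HC hs]].
apply: (seg_side hj (@seg_connected R _ _) HA _ HC hs).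
exists 2^-1; split; first by apply/andP; split; [rewrite invr_ge0 | rewrite invf_le1 // ler1n].
by rewrite /m /v pj; vecring.
Qed.
End Sides.


Lemma crnz (R : realType) (d m : 'rV[R]_2) : dot m m = 1 -> dot m d = 0 -> d <> 0 -> cr d m != 0.
Proof.
rewrite /cr !dotE => u o dn; apply/negP => /eqP h; apply: dn.
have e0 : c0 d = 0.
  have -> : c0 d = c0 m * (c0 m * c0 d + c1 m * c1 d) + c1 m * (c0 d * c1 m - c1 d * c0 m) + c0 d * (1 - (c0 m * c0 m + c1 m * c1 m)) by ring.
  by rewrite o h u; ring.
have e1 : c1 d = 0.
  have -> : c1 d = c1 m * (c0 m * c0 d + c1 m * c1 d) - c0 m * (c0 d * c1 m - c1 d * c0 m) + c1 d * (1 - (c0 m * c0 m + c1 m * c1 m)) by ring.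
  by rewrite o h u; ring.
by apply: vecP; rewrite !cE ?e0 ?e1.
Qed.

Lemma per_nxt (R : realType) (n : nat) (f : nat -> 'rV[R]_2) i : (3 <= n)%N -> (1 <= i <= n)%N ->
  (forall k, f (k + n)%N = f k) -> f (nxt n i) = f i.+1 /\ f (nxt n (nxt n i)) = f i.+2.
Proof.
move=> n3 hi per; rewrite /nxt.
have [->|hin] := eqVneq i n.
  rewrite ?eqxx; have -> : (1 == n) = false by apply/eqP; lia.
  by split; [rewrite -(per 1); congr f; lia | rewrite -(per 2); congr f; lia].
rewrite ?(negbTE hin); split => //.
have [e|ne] := eqVneq i.+1 n.
  by rewrite ?e ?eqxx -(per 1); congr f; lia.
by rewrite ?(negbTE ne).
Qed.


Lemma cons_all (R : realType) (n : nat) (p u : nat -> 'rV[R]_2) :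
  simple_closed_polygon n p ->
  (forall i, (1 <= i <= n)%N ->
     [/\ dot (u i) (u i) = 1,
         dot (u i) (p i - p i.-1) = 0 &
         forall b, relint_segment (p i.-1) (p i) b ->
           exists d : R, 0 < d /\ forall e : R, 0 < e < d ->
             poly_ext (polygon n p) (b + e *: u i) /\
             poly_int (polygon n p) (b - e *: u i)]) ->
  forall i, (1 <= i <= n)%N -> consv n p u i.
Proof.
move=> hP H i hi; rewrite /consv.
have hj := nxt_range hP hi.
have pj := p_nxt_pred hP hi.
set j := nxt n i in hj pj *.
have [u1 o1 Hi] := H i hi; have [uj oj Hj] := H j hj.
have o2 : dot (u j) (p j - p i) = 0 by rewrite -pj.
have c1 : cr (p i - p i.-1) (u i) != 0.
  apply: crnz u1 o1 _ => /eqP; rewrite subr_eq0 => /eqP h; exact: (pdist hP hi) (esym h).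
have c2 : cr (p j - p i) (u j) != 0.
  apply: crnz uj o2 _ => /eqP; rewrite subr_eq0 => /eqP h; apply: (pdist hP hj); rewrite pj; exact: (esym h).
rewrite ltNge; apply/negP => hle.
have hlt : cr (p i - p i.-1) (u i) * cr (p j - p i) (u j) < 0.
  by rewrite lt_neqAle hle andbT mulf_neq0.
have u2 : dot (- u j) (- u j) = 1 by rewrite dotNl dotNr opprK.
have o2' : dot (- u j) (p j - p i) = 0 by rewrite dotNl o2 oppr0.
have hc : 0 < cr (p i - p i.-1) (u i) * cr (p j - p i) (- u j).
  by rewrite crNr mulrN oppr_gt0.
have h2a : (0 : R) < 2^-1 by rewrite invr_gt0.
have h2b : (2^-1 : R) < 1 by rewrite invf_lt1 // ltr1n.
set b1 := (1 - 2^-1) *: p i.-1 + 2^-1 *: p i.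
set b2 := (1 - 2^-1) *: p j.-1 + 2^-1 *: p j.
have hb1 : relint_segment (p i.-1) (p i) b1 by exists 2^-1; rewrite h2a h2b.
have hb2 : relint_segment (p j.-1) (p j) b2 by exists 2^-1; rewrite h2a h2b.
have A1 := avoid_a hP hi u1 u2 o1 o2' hc hb1 (ltac:(by rewrite u1 ltr01) : 0 < dot (u i) (u i)).
have A2 := avoid_a' hP hi u1 u2 o1 o2' hc hb2 (ltac:(by rewrite u2 ltr01) : 0 < dot (- u j) (- u j)).
have X := Hi b1 hb1; have Y := Hj b2 hb2.
have [d [d0 Hd]] := evI A1 (evI A2 (evI X Y)).
have he : 0 < d / 2 < d by rewrite divr_gt0 // ltr_pdivrMr // ltr_pMr // ltr1n.
have [HA1 [HA2 [[Ex _] [_ Iy]]]] := Hd _ he.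
set e := d / 2 in HA1 HA2 Ex Iy.
set V0 := p i + e *: (u i + - u j).
have S1 : segment (b1 + e *: u i) V0 (b1 + e *: u i) by exists 0; split; [rewrite lexx ler01 | vecring].
have S1' : segment (b1 + e *: u i) V0 V0 by exists 1; split; [rewrite lexx ler01 | vecring].
have S2 : segment V0 (b2 + e *: - u j) V0 by exists 0; split; [rewrite lexx ler01 | vecring].
have S2' : segment V0 (b2 + e *: - u j) (b2 + e *: - u j) by exists 1; split; [rewrite lexx ler01 | vecring].
have E1 := cc_eq (@seg_connected R _ _) HA1 S1 S1'.
have E2 := cc_eq (@seg_connected R _ _) HA2 S2 S2'.
case: Ex => _ nb; case: Iy => _ bd.
apply: nb; rewrite E1 E2.
by rewrite scalerN.
Qed.

Unset Implicit Arguments.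
Theorem lemma3p2 (R : realType) (n : nat) (p u : nat -> 'rV[R]_2) :
  simple_closed_polygon n p ->
  (forall k, u (k + n)%N = u k) ->
  (forall i, (1 <= i <= n)%N ->
     [/\ dot (u i) (u i) = 1,
         dot (u i) (p i - p i.-1) = 0 &
         forall b, relint_segment (p i.-1) (p i) b ->
           exists d : R, 0 < d /\ forall e : R, 0 < e < d ->
             poly_ext (polygon n p) (b + e *: u i) /\
             poly_int (polygon n p) (b - e *: u i)]) ->
  (forall i, (1 <= i <= n)%N ->
   forall (b v : 'rV[R]_2), relint_segment (p i.-1) (p i) b -> 0 < dot v (u i) ->
   exists d : R, 0 < d /\ forall e : R, 0 < e < d ->
     segment (b + e *: v) (p i + e *: (u i + u i.+1)) `<=` poly_ext (polygon n p) /\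
     segment (b - e *: v) (p i - e *: (u i + u i.+1)) `<=` poly_int (polygon n p))
  /\
  (forall i, (1 <= i <= n)%N ->
   exists d : R, 0 < d /\ forall e : R, 0 < e < d ->
     segment (p i + e *: (u i + u i.+1)) (p i.+1 + e *: (u i.+1 + u i.+2))
       `<=` poly_ext (polygon n p) /\
     segment (p i - e *: (u i + u i.+1)) (p i.+1 - e *: (u i.+1 + u i.+2))
       `<=` poly_int (polygon n p)).
Proof.
move=> hP uper H.
have h3 := n3 hP.
have hok : forall k, (1 <= k <= n)%N -> okn p u k.
  by move=> k hk; have [? ? _] := H k hk.
have hokN : forall k, (1 <= k <= n)%N -> okn p (fun k => - u k) k.
  move=> k hk; have [u1 o1 _] := H k hk; split.
    by rewrite dotNl dotNr opprK.
  by rewrite dotNl o1 oppr0.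
have hext : forall k, (1 <= k <= n)%N -> forall b, relint_segment (p k.-1) (p k) b ->
    ev (fun e => Side n p (fun C => ~ bounded_set C) (b + e *: u k)).
  move=> k hk b hb; have [_ _ Hk] := H k hk.
  by apply: evW (Hk b hb) => e _ [].
have hint : forall k, (1 <= k <= n)%N -> forall b, relint_segment (p k.-1) (p k) b ->
    ev (fun e => Side n p bounded_set (b + e *: (fun k => - u k) k)).
  move=> k hk b hb; have [_ _ Hk] := H k hk.
  by apply: evW (Hk b hb) => e _ [_]; rewrite scalerN.
have hc := cons_all hP H.
have hcN : forall i, (1 <= i <= n)%N -> consv n p (fun k => - u k) i.
  by move=> i hi; have := hc i hi; rewrite /consv !crNr mulrNN.
split.
- move=> i hi b v hb hv.
  have [un _] := per_nxt h3 hi uper.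
  have A1 := gen_a hP hok hext hi (hc i hi) hb hv.
  have A2 := gen_a hP hokN hint hi (hcN i hi) hb (v := - v) (ltac:(by rewrite dotNl dotNr opprK)).
  have [d [d0 Hd]] := evI A1 A2.
  exists d; split => // e he; have [h1 h2] := Hd e he.
  rewrite -un; split; first exact: h1.
  have -> : b - e *: v = b + e *: - v by rewrite scalerN.
  have -> : p i - e *: (u i + u (nxt n i)) = p i + e *: (- u i + - u (nxt n i)) by rewrite -opprD scalerN.
  exact: h2.
- move=> i hi.
  have hj := nxt_range hP hi.
  have [un un2] := per_nxt h3 hi uper.
  have [pn _] := per_nxt h3 hi (pper hP).
  have A1 := gen_b hP hok hext hi (hc i hi) (hc _ hj).
  have A2 := gen_b hP hokN hint hi (hcN i hi) (hcN _ hj).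
  have [d [d0 Hd]] := evI A1 A2.
  exists d; split => // e he; have [h1 h2] := Hd e he.
  rewrite -un -un2 -pn; split; first exact: h1.
  have -> : p i - e *: (u i + u (nxt n i)) = p i + e *: (- u i + - u (nxt n i)) by rewrite -opprD scalerN.
  have -> : p (nxt n i) - e *: (u (nxt n i) + u (nxt n (nxt n i))) =
            p (nxt n i) + e *: (- u (nxt n i) + - u (nxt n (nxt n i))) by rewrite -opprD scalerN.
  exact: h2.
Qed.
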